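(* For every integer $d\ge 0$ and every line segment $s$ with $\operatorname{height}(s)=1$ and $\operatorname{width}(s)\le 1$, there exists a $d$-dimensional box type $T$ that contains $s$ when $s$ is translated so that its lower endpoint coincides with the midpoint of the bottom edge of $T$.
   Context: For a compact set $S\subset\mathbb R^2$, $\operatorname{width}(S)=\max_{p,q\in S}|x(p)-x(q)|$ and $\operatorname{height}(S)=\max_{p,q\in S}|y(p)-y(q)|$. A horizontal parallelogram is one with a pair of horizontal edges (its bottom and top edges). Box types: the $0$-dimensional (basic) box type $[\,]$ is a $2\times 1$ axis-parallel rectangle. Given a $d$-dimensional box type $T=[x_1,\dots,x_d]\in\{-1,0,+1\}^d$, which is a horizontal parallelogram of height $1$ with bottom edge $b$ and top edge $t$, partition $b$ into three equally long segments $b_{-1},b_0,b_{+1}$ (from left to right) and likewise $t$ into $t_{-1},t_0,t_{+1}$; for $x_{d+1}\in\{-1,0,+1\}$ the $(d+1)$-dimensional box type $T\oplus[x_{d+1}]=[x_1,\dots,x_{d+1}]$ is the parallelogram with bottom edge $b_0$ and top edge $t_{x_{d+1}}$. (Thus all box types obtained from a fixed basic rectangle share the midpoint of their bottom edges.) *)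

(* Defs.v *)
From mathcomp Require Import all_boot all_order all_algebra.
Set Implicit Arguments. Unset Strict Implicit. Unset Printing Implicit Defensive.
Import Order.TTheory GRing.Theory Num.Theory.
Local Open Scope ring_scope.

(* A horizontal parallelogram of height 1 whose bottom edge lies on y = 0 and
   top edge on y = 1, given by its bottom edge [bl, br] x {0} and its top edge
   [tl, tr] x {1} (with br - bl = tr - tl for box types). *)
Record hpar (R : realFieldType) := HPar { bl : R; br : R; tl : R; tr : R }.

Definition in_hpar (R : realFieldType) (P : hpar R) (z : R * R) : Prop :=
  0 <= z.2 <= 1 /\
  (1 - z.2) * bl P + z.2 * tl P <= z.1 <= (1 - z.2) * br P + z.2 * tr P.

Definition basic_box (R : realFieldType) : hpar R := HPar (-1) 1 (-1) 1.

(* T (+) [x]: bottom edge b_0 (middle third of b), top edge t_x. *)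
Definition box_step (R : realFieldType) (P : hpar R) (x : int) : hpar R :=
  let wb := (br P - bl P) / 3%:R in
  let wt := (tr P - tl P) / 3%:R in
  HPar (bl P + wb) (bl P + 2%:R * wb)
       (tl P + (x + 1)%:~R * wt) (tl P + (x + 2)%:~R * wt).

Definition box_type (R : realFieldType) (xs : seq int) : hpar R :=
  foldl (@box_step R) (basic_box R) xs.

Definition box_index (d : nat) (xs : seq int) : bool :=
  (size xs == d) && all (fun x => x \in [:: -1; 0; 1]) xs.

Definition bottom_mid (R : realFieldType) (P : hpar R) : R * R :=
  ((bl P + br P) / 2%:R, 0).

Definition in_segment (R : realFieldType) (p q z : R * R) : Prop :=
  exists2 t : R, 0 <= t <= 1 &
    z = ((1 - t) * p.1 + t * q.1, (1 - t) * p.2 + t * q.2).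

(* Main.v *)
Require Import Defs.
From mathcomp Require Import all_boot all_order all_algebra.
From mathcomp Require Import ring lra.
Import Order.TTheory GRing.Theory Num.Theory.
Local Open Scope ring_scope.

Lemma step_ok (R : realFieldType) (P : hpar R) (w : R) (x : int) :
  bl P <= br P -> tl P + (x + 1)%:~R * ((tr P - tl P) / 3%:R) <= w
  <= tl P + (x + 2)%:~R * ((tr P - tl P) / 3%:R) ->
  let Q := box_step P x in
  [/\ bl Q <= br Q, tl Q <= w <= tr Q & (bl Q + br Q) / 2%:R = (bl P + br P) / 2%:R].
Proof.
move=> hb hw /=; split => //.
- have : 0 <= (br P - bl P) / 3%:R by apply: divr_ge0; lra.
  lra.
- by field; rewrite ?pnatr_eq0.
Qed.

Lemma exist_xs (R : realFieldType) (w : R) (d : nat) : forall (P : hpar R),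
  bl P <= br P -> tl P <= w <= tr P ->
  exists2 xs, box_index d xs &
    let Q := foldl (@box_step R) P xs in
    [/\ bl Q <= br Q, tl Q <= w <= tr Q & (bl Q + br Q) / 2%:R = (bl P + br P) / 2%:R].
Proof.
elim: d => [|d IH] P hb hw.
  by exists [::].
set wt := (tr P - tl P) / 3%:R.
have ewt : tr P = tl P + 3%:R * wt by rewrite /wt; field; rewrite ?pnatr_eq0.
have hwt : 0 <= wt by rewrite /wt; apply: divr_ge0; lra.
have [x hx hxw] : exists2 x : int, x \in [:: -1; 0; 1] &
   tl P + (x + 1)%:~R * wt <= w <= tl P + (x + 2)%:~R * wt.
  case: (lerP w (tl P + wt)) => h1.
    exists (-1) => //; rewrite /= !intrD /=; lra.
  case: (lerP w (tl P + 2%:R * wt)) => h2.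
    exists 0 => //; rewrite /=; lra.
  exists 1 => //; rewrite /= !intrD /=; lra.
have [hb' hw' hm'] := @step_ok R P w x hb hxw.
have [xs hxs [h1 h2 h3]] := IH _ hb' hw'.
exists (x :: xs).
  by move: hxs; rewrite /box_index /= eqSS hx => /andP[-> ->].
by rewrite /= h3 hm'.
Qed.

Lemma in_par (R : realFieldType) (P : hpar R) (w s : R) :
  bl P <= br P -> tl P <= w <= tr P -> 0 <= s <= 1 ->
  (bl P + br P) / 2%:R = 0 ->
  in_hpar P (s * w + (bl P + br P) / 2%:R, s).
Proof.
move=> hb /andP[hw1 hw2] /andP[hs1 hs2] hm0; rewrite /in_hpar /=; split.
  by apply/andP.
set m := (bl P + br P) / 2%:R.
have hm1 : bl P <= m by rewrite /m; lra.
have hm2 : m <= br P by rewrite /m; lra.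
have a1 : 0 <= (1 - s) * (m - bl P) by apply: mulr_ge0; lra.
have a2 : 0 <= (1 - s) * (br P - m) by apply: mulr_ge0; lra.
have a3 : 0 <= s * (w - tl P) by apply: mulr_ge0; lra.
have a4 : 0 <= s * (tr P - w) by apply: mulr_ge0; lra.
have em : m = 0 by rewrite /m.
rewrite em in a1 a2 *.
apply/andP; split; nra.
Qed.

Theorem lemma14 (R : realFieldType) (d : nat) (p q : R * R) :
  `|q.2 - p.2| = 1 -> `|q.1 - p.1| <= 1 ->
  let low := if p.2 <= q.2 then p else q in
  exists2 xs : seq int, box_index d xs &
    forall z : R * R, in_segment p q z ->
      in_hpar (box_type R xs)
        (z.1 - low.1 + (bottom_mid (box_type R xs)).1,
         z.2 - low.2 + (bottom_mid (box_type R xs)).2).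
Proof.
move=> h2 h1 low.
set w := if p.2 <= q.2 then q.1 - p.1 else p.1 - q.1.
have hw : `|w| <= 1 by rewrite /w; case: ifP => //; rewrite distrC.
have hw' : -1 <= w <= 1 by rewrite -ler_norml.
have [xs hxs [hb hwq hm]] := @exist_xs R w d (basic_box R) ltac:(rewrite /=; lra) hw'.
have hm0 : (bl (box_type R xs) + br (box_type R xs)) / 2%:R = 0.
  by rewrite /box_type hm /= addNr mul0r.
exists xs => // z [t ht ->].
rewrite /bottom_mid /=.
move: ht => /andP[ht1 ht2].
rewrite /low /w in hwq *; case: ifP => hpq in hwq *.
- have e : q.2 - p.2 = 1 by rewrite -h2 ger0_norm // subr_ge0.
  have -> : (1 - t) * p.1 + t * q.1 - p.1 = t * (q.1 - p.1) by ring.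
  have -> : (1 - t) * p.2 + t * q.2 - p.2 + 0 = t * (q.2 - p.2) by ring.
  rewrite e mulr1.
  apply: in_par => //; lra.
- have e : p.2 - q.2 = 1.
    rewrite -h2 ltr0_norm ?opprB // subr_lt0; by rewrite ltNge hpq.
  have -> : (1 - t) * p.1 + t * q.1 - q.1 = (1 - t) * (p.1 - q.1) by ring.
  have -> : (1 - t) * p.2 + t * q.2 - q.2 + 0 = (1 - t) * (p.2 - q.2) by ring.
  rewrite e mulr1.
  apply: in_par => //; lra.
Qed.
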